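(* Let $\phi : D\to D'$ be a natural transformation between Dirichlet functors. Then $\phi$ is cartesian (i.e. for every function $g:X\to X'$ the naturality square with sides $\phi_{X'}:D(X')\to D'(X')$, $\phi_X:D(X)\to D'(X)$, $D(g)$, $D'(g)$ is a pullback in $\mathbf{Set}$) if and only if the square $D(1)\xrightarrow{\phi_1}D'(1)$ over $D(0)\xrightarrow{\phi_0}D'(0)$ (with vertical maps $D(!_0)$ and $D'(!_0)$) is a pullback. As a corollary, the equivalence $\mathbf{Dir}\simeq\mathbf{Set}^{\downarrow}$ given by evaluation at $!_0$ restricts to an equivalence $\mathbf{Dir}_{\ulcorner}\simeq\mathbf{Set}^{\downarrow}_{\ulcorner}$.
   Context: A Dirichlet functor is a functor $D:\mathbf{Set}^{op}\to\mathbf{Set}$ preserving connected limits; $\mathbf{Dir}$ is the category of Dirichlet functors and natural transformations, which is equivalent to $\mathbf{Set}^{\downarrow}$ (functions $E\to B$ and commuting squares) via $D\mapsto (D(!_0):D(1)\to D(0))$, where $!_0:0\to1$ is the unique map from the empty set. $\mathbf{Dir}_{\ulcorner}$ is the (wide) subcategory of Dirichlet functors and cartesian natural transformations; $\mathbf{Set}^{\downarrow}_{\ulcorner}$ is the subcategory of bundles and morphisms that are pullback squares. *)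

(* Defs.v *)
(* "sets" are Rocq types, functions are Rocq functions,
   equality of functions is taken pointwise. *)
From Stdlib Require Import Relations.

Record Cat := {
  ob : Type;
  hom : ob -> ob -> Type;
  cid : forall a, hom a a;
  ccomp : forall a b c, hom b c -> hom a b -> hom a c;
  ccomp_id_l : forall a b (f : hom a b), ccomp a b b (cid b) f = f;
  ccomp_id_r : forall a b (f : hom a b), ccomp a a b f (cid a) = f;
  ccomp_assoc : forall a b c d (f : hom a b) (g : hom b c) (h : hom c d),
      ccomp a c d h (ccomp a b c g f) = ccomp a b d (ccomp b c d h g) f
}.
Arguments ccomp {J a b c} : rename.
Arguments cid {J} : rename.

Definition connected (J : Cat) : Prop :=
  inhabited (ob J) /\
  forall a b : ob J,
    clos_refl_sym_trans (ob J) (fun x y => inhabited (hom J x y)) a b.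

Record Diagram (J : Cat) := {
  dob : ob J -> Type;
  dmap : forall a b, hom J a b -> dob a -> dob b;
  dmap_id : forall a x, dmap a a (cid a) x = x;
  dmap_comp : forall a b c (f : hom J a b) (g : hom J b c) x,
      dmap a c (ccomp g f) x = dmap b c g (dmap a b f x)
}.
Arguments dob {J}.
Arguments dmap {J} F {a b} : rename.

Definition is_colimit {J : Cat} (F : Diagram J) (C : Type)
  (iota : forall j, dob F j -> C) : Prop :=
  (forall a b (u : hom J a b) x, iota b (dmap F u x) = iota a x) /\
  forall (T : Type) (t : forall j, dob F j -> T),
    (forall a b (u : hom J a b) x, t b (dmap F u x) = t a x) ->
    exists h : C -> T,
      (forall j x, h (iota j x) = t j x) /\
      (forall h' : C -> T, (forall j x, h' (iota j x) = t j x) -> forall c, h' c = h c).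

Record CFun := {
  fob : Type -> Type;
  fmap : forall X Y : Type, (X -> Y) -> fob Y -> fob X;
  fmap_id : forall X (x : fob X), fmap X X (fun z => z) x = x;
  fmap_comp : forall X Y Z (f : X -> Y) (g : Y -> Z) (z : fob Z),
      fmap X Z (fun x => g (f x)) z = fmap X Y f (fmap Y Z g z)
}.
Arguments fmap D {X Y} : rename.

Definition preserves_limit_of (D : CFun) {J : Cat} (F : Diagram J) (C : Type)
  (iota : forall j, dob F j -> C) : Prop :=
  forall (T : Type) (q : forall j, T -> fob D (dob F j)),
    (forall a b (u : hom J a b) t, fmap D (dmap F u) (q b t) = q a t) ->
    exists h : T -> fob D C,
      (forall j t, fmap D (iota j) (h t) = q j t) /\
      (forall h' : T -> fob D C, (forall j t, fmap D (iota j) (h' t) = q j t) ->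
         forall t, h' t = h t).

(* A Dirichlet functor: D : Set^op -> Set preserving connected limits, i.e.
   sending connected colimits in Set (= connected limits in Set^op) to limits. *)
Definition is_dirichlet (D : CFun) : Prop :=
  forall (J : Cat), connected J ->
  forall (F : Diagram J) (C : Type) (iota : forall j, dob F j -> C),
    is_colimit F C iota -> preserves_limit_of D F C iota.

Definition natural (D D' : CFun) (phi : forall X, fob D X -> fob D' X) : Prop :=
  forall X Y (g : X -> Y) (y : fob D Y), phi X (fmap D g y) = fmap D' g (phi Y y).

(* The square   Q --pa--> A
                |         |
               pb         f
                v         v
                B --g---> P     is a pullback in Set. *)
Definition is_pullback {Q A B P : Type} (pa : Q -> A) (pb : Q -> B)
  (f : A -> P) (g : B -> P) : Prop :=
  (forall z, f (pa z) = g (pb z)) /\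
  forall (T : Type) (x : T -> A) (y : T -> B),
    (forall t, f (x t) = g (y t)) ->
    exists h : T -> Q,
      (forall t, pa (h t) = x t /\ pb (h t) = y t) /\
      (forall h' : T -> Q, (forall t, pa (h' t) = x t /\ pb (h' t) = y t) ->
         forall t, h' t = h t).

Definition cartesian (D D' : CFun) (phi : forall X, fob D X -> fob D' X) : Prop :=
  forall (X X' : Type) (g : X -> X'),
    is_pullback (phi X') (fmap D g) (fmap D' g) (phi X).

Definition bang0 : Empty_set -> unit := fun e => match e with end.

Definition bijective {A B : Type} (f : A -> B) : Prop :=
  exists g : B -> A, (forall a, g (f a) = a) /\ (forall b, f (g b) = b).

(* Main.v *)
Require Import Defs.
From Stdlib Require Import Relations Classical ClassicalEpsilon FunctionalExtensionality PropExtensionality ProofIrrelevance.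

Definition bangX (X : Type) : Empty_set -> X := fun e => match e with end.
Definition cst {X : Type} (x : X) : unit -> X := fun _ => x.

Definition JX_hom (X : Type) (a b : option X) : Type :=
  match a, b with
  | None, _ => unit
  | Some x, Some y => x = y
  | Some _, None => Empty_set
  end.

Definition JX_id X (a : option X) : JX_hom X a a :=
  match a as a' return JX_hom X a' a' with None => tt | Some x => eq_refl end.

Definition JX_comp X (a b c : option X) : JX_hom X b c -> JX_hom X a b -> JX_hom X a c :=
  match a as a', b as b', c as c'
    return JX_hom X b' c' -> JX_hom X a' b' -> JX_hom X a' c' with
  | None, _, _ => fun _ _ => tt
  | Some x, Some y, Some z => fun g f => eq_trans f g
  | Some x, None, _ => fun _ f => match f with end
  | Some x, Some y, None => fun g _ => match g with end
  end.

Lemma JX_hom_sub X a b (f g : JX_hom X a b) : f = g.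
Proof.
  destruct a, b; simpl in *.
  - apply proof_irrelevance.
  - destruct f.
  - destruct f, g; reflexivity.
  - destruct f, g; reflexivity.
Qed.

Definition JX (X : Type) : Cat :=
  {| ob := option X; hom := JX_hom X; cid := JX_id X; ccomp := JX_comp X;
     ccomp_id_l := fun a b f => JX_hom_sub X a b _ _;
     ccomp_id_r := fun a b f => JX_hom_sub X a b _ _;
     ccomp_assoc := fun a b c d f g h => JX_hom_sub X a d _ _ |}.

Definition dobX (X : Type) (a : option X) : Type :=
  match a with None => Empty_set | Some _ => unit end.

Definition dmapX X (a b : option X) : JX_hom X a b -> dobX X a -> dobX X b :=
  match a as a', b as b' return JX_hom X a' b' -> dobX X a' -> dobX X b' with
  | None, None => fun _ z => z
  | None, Some y => fun _ => bang0
  | Some x, Some y => fun _ z => z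
  | Some x, None => fun u => match u with end
  end.

Lemma dmapX_id X a x : dmapX X a a (JX_id X a) x = x.
Proof. destruct a; simpl in *; [reflexivity | destruct x]. Qed.

Lemma dmapX_comp X a b c (f : JX_hom X a b) (g : JX_hom X b c) x :
  dmapX X a c (JX_comp X a b c g f) x = dmapX X b c g (dmapX X a b f x).
Proof. destruct a, b, c; simpl in *; try destruct f; try destruct g; try destruct x; reflexivity. Qed.

Definition FX (X : Type) : Diagram (JX X) :=
  Build_Diagram (JX X) (dobX X) (dmapX X) (dmapX_id X) (dmapX_comp X).

Definition iotaX (X : Type) (j : option X) : dobX X j -> X :=
  match j as j' return dobX X j' -> X with None => bangX X | Some x => cst x end.

Lemma colimX X : is_colimit (FX X) X (iotaX X).
Proof.
  split.
  - intros a b u x. destruct a, b; simpl in *; try destruct x; try destruct u; reflexivity.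
  - intros T t Ht. exists (fun x => t (Some x) tt). split.
    + intros j x. destruct j; simpl in *; destruct x; reflexivity.
    + intros h' Hh' c. rewrite <- (Hh' (Some c) tt). reflexivity.
Qed.

Lemma connX X : connected (JX X).
Proof.
  split.
  - constructor. exact None.
  - intros a b. apply rst_trans with None.
    + apply rst_sym, rst_step. constructor. simpl. destruct a; exact tt.
    + apply rst_step. constructor. simpl. destruct b; exact tt.
Qed.

Lemma rep (D : CFun) (HD : is_dirichlet D) (X : Type) (b : fob D Empty_set)
  (e : X -> fob D unit) (He : forall x, fmap D bang0 (e x) = b) :
  exists d, fmap D (bangX X) d = b /\ (forall x, fmap D (cst x) d = e x) /\
    forall d', fmap D (bangX X) d' = b -> (forall x, fmap D (cst x) d' = e x) -> d' = d.
Proof.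
  pose proof (HD (JX X) (connX X) (FX X) X (iotaX X) (colimX X)) as H.
  destruct (H unit (fun j _ => match j as j' return fob D (dobX X j') with
                               | None => b | Some x => e x end)) as [h [H1 H2]].
  - intros a c u t. destruct a, c; simpl in *.
    + subst; apply fmap_id.
    + destruct u.
    + apply He.
    + apply fmap_id.
  - exists (h tt). split; [apply (H1 None tt)|split].
    + intros x. apply (H1 (Some x) tt).
    + intros d' E1 E2. apply (H2 (fun _ => d')). 
      intros j t. destruct j; simpl; auto.
Qed.

Lemma bang_cst D X (x : X) (d : fob D X) : fmap D bang0 (fmap D (cst x) d) = fmap D (bangX X) d.
Proof. rewrite <- fmap_comp. f_equal. extensionality z. destruct z. Qed.

Lemma bang_fmap D X X' (g : X -> X') (d : fob D X') :
  fmap D (bangX X) (fmap D g d) = fmap D (bangX X') d.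
Proof. rewrite <- fmap_comp. f_equal. extensionality z. destruct z. Qed.

Lemma cst_fmap D X X' (g : X -> X') (x : X) (d : fob D X') :
  fmap D (cst x) (fmap D g d) = fmap D (cst (g x)) d.
Proof. rewrite <- fmap_comp. reflexivity. Qed.

Lemma ext D (HD : is_dirichlet D) X (d1 d2 : fob D X) :
  fmap D (bangX X) d1 = fmap D (bangX X) d2 ->
  (forall x, fmap D (cst x) d1 = fmap D (cst x) d2) -> d1 = d2.
Proof.
  intros Hb Hc.
  destruct (rep D HD X (fmap D (bangX X) d1) (fun x => fmap D (cst x) d1)) as [d [_ [_ U]]].
  - intros x. apply bang_cst.
  - rewrite (U d1), (U d2); auto; intros x; symmetry; auto.
Qed.

Lemma pb_elem {Q A B P} (pa : Q -> A) (pb : Q -> B) (f : A -> P) (g : B -> P) :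
  is_pullback pa pb f g ->
  forall a b, f a = g b -> exists q, pa q = a /\ pb q = b /\
     forall q', pa q' = a -> pb q' = b -> q' = q.
Proof.
  intros [Hc Hu] a b Hab.
  destruct (Hu unit (fun _ => a) (fun _ => b) (fun _ => Hab)) as [h [H1 H2]].
  exists (h tt). split; [apply H1|split;[apply H1|]].
  intros q' E1 E2. apply (H2 (fun _ => q')).  intros; auto.
Qed.

Lemma pb_of_elem {Q A B P} (pa : Q -> A) (pb : Q -> B) (f : A -> P) (g : B -> P) :
  (forall z, f (pa z) = g (pb z)) ->
  (forall a b, f a = g b -> exists q, pa q = a /\ pb q = b /\
     forall q', pa q' = a -> pb q' = b -> q' = q) ->
  is_pullback pa pb f g.
Proof.
  intros Hc He. split; auto. intros T x y Hxy.
  exists (fun t => proj1_sig (constructive_indefinite_description _ (He _ _ (Hxy t)))).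
  split.
  - intros t. destruct (proj2_sig (constructive_indefinite_description _ (He _ _ (Hxy t)))) as [E1 [E2 _]]. split; assumption.
  - intros h' Hh' t. destruct (proj2_sig (constructive_indefinite_description _ (He _ _ (Hxy t)))) as [E1 [E2 E3]].
    apply E3; apply Hh'.
Qed.

Lemma fchoice {A B} (R : A -> B -> Prop) : (forall a, exists b, R a b) -> exists f, forall a, R a (f a).
Proof.
  intros H. exists (fun a => proj1_sig (constructive_indefinite_description _ (H a))).
  intros a. exact (proj2_sig (constructive_indefinite_description _ (H a))).
Qed.

Lemma cart_of_pb D D' phi (HD : is_dirichlet D) (HD' : is_dirichlet D') (Hn : natural D D' phi)
  (P0 : is_pullback (phi unit) (fmap D bang0) (fmap D' bang0) (phi Empty_set)) :
  cartesian D D' phi.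
Proof.
  intros X X' g. apply pb_of_elem.
  - intros z. symmetry. apply Hn.
  - intros a' d Had.
    assert (Hc : forall x', fmap D' bang0 (fmap D' (cst x') a') = phi Empty_set (fmap D (bangX X) d)).
    { intros x'. rewrite bang_cst, Hn, <- Had, bang_fmap. reflexivity. }
    destruct (fchoice _ (fun x' => pb_elem _ _ _ _ P0 _ _ (Hc x'))) as [ex Hex].
    destruct (rep D HD X' (fmap D (bangX X) d) ex) as [e [Eb [Ec _]]].
    { intros x'. apply Hex. }
    exists e. split; [|split].
    + apply (ext D' HD').
      * rewrite <- Hn, Eb, Hn, <- Had, bang_fmap. reflexivity.
      * intros x'. rewrite <- Hn, Ec. apply Hex.
    + apply (ext D HD).
      * rewrite bang_fmap, Eb. reflexivity.
      * intros x. rewrite cst_fmap, Ec. symmetry. apply Hex.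
        -- rewrite Hn, <- Had, cst_fmap. reflexivity.
        -- apply bang_cst.
    + intros e' E1 E2. apply (ext D HD).
      * rewrite Eb, <- E2, bang_fmap. reflexivity.
      * intros x'. rewrite Ec. apply Hex.
        -- rewrite Hn, E1. reflexivity.
        -- rewrite bang_cst, <- E2, bang_fmap. reflexivity.
Qed.

Lemma cst_unit (u : unit) : cst u = fun z => z.
Proof. extensionality z. destruct u, z. reflexivity. Qed.

Lemma bang_empty : bangX Empty_set = fun z => z.
Proof. extensionality z. destruct z. Qed.

Lemma part_i (D D' : CFun) : is_dirichlet D -> is_dirichlet D' ->
     forall (f1 : fob D unit -> fob D' unit) (f0 : fob D Empty_set -> fob D' Empty_set),
       is_pullback f1 (fmap D bang0) (fmap D' bang0) f0 ->
       exists phi : forall X, fob D X -> fob D' X,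
         natural D D' phi /\ cartesian D D' phi /\
         (forall x, phi unit x = f1 x) /\ (forall x, phi Empty_set x = f0 x) /\
         (forall psi : forall X, fob D X -> fob D' X,
            natural D D' psi -> cartesian D D' psi ->
            (forall x, psi unit x = f1 x) -> (forall x, psi Empty_set x = f0 x) ->
            forall X x, psi X x = phi X x).
Proof.
  intros HD HD' f1 f0 P0.
  assert (Hex : forall X (d : fob D X), exists d', fmap D' (bangX X) d' = f0 (fmap D (bangX X) d) /\
            (forall x, fmap D' (cst x) d' = f1 (fmap D (cst x) d))).
  { intros X d. destruct (rep D' HD' X (f0 (fmap D (bangX X) d)) (fun x => f1 (fmap D (cst x) d)))
      as [d' [E1 [E2 _]]].
    - intros x. rewrite (proj1 P0). f_equal. apply bang_cst.
    - exists d'; auto. }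
  pose (phi := fun X d => proj1_sig (constructive_indefinite_description _ (Hex X d))).
  assert (Hphi : forall X d, fmap D' (bangX X) (phi X d) = f0 (fmap D (bangX X) d) /\
            (forall x, fmap D' (cst x) (phi X d) = f1 (fmap D (cst x) d))).
  { intros X d. exact (proj2_sig (constructive_indefinite_description _ (Hex X d))). }
  clearbody phi.
  assert (Hn : natural D D' phi).
  { intros X Y g y. apply (ext D' HD').
    - rewrite (proj1 (Hphi _ _)), bang_fmap, bang_fmap, (proj1 (Hphi _ _)). reflexivity.
    - intros x. rewrite (proj2 (Hphi _ _)), cst_fmap, cst_fmap, (proj2 (Hphi _ _)). reflexivity. }
  assert (H1 : forall x, phi unit x = f1 x).
  { intros x. apply (ext D' HD').
    - rewrite (proj1 (Hphi _ _)). change (bangX unit) with bang0. rewrite (proj1 P0). reflexivity.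
    - intros u. rewrite (proj2 (Hphi _ _)), cst_unit, !fmap_id. reflexivity. }
  assert (H0 : forall x, phi Empty_set x = f0 x).
  { intros x. apply (ext D' HD').
    - rewrite (proj1 (Hphi _ _)), bang_empty, !fmap_id. reflexivity.
    - intros u. destruct u. }
  exists phi. split; [exact Hn|split; [|split; [exact H1|split; [exact H0|]]]].
  - apply cart_of_pb; auto.
    replace (phi unit) with f1 by (extensionality x; symmetry; apply H1).
    replace (phi Empty_set) with f0 by (extensionality x; symmetry; apply H0).
    exact P0.
  - intros psi Hpsi _ Hp1 Hp0 X x. apply (ext D' HD').
    + rewrite <- Hpsi, Hp0, (proj1 (Hphi _ _)). reflexivity.
    + intros y. rewrite <- Hpsi, Hp1, (proj2 (Hphi _ _)). reflexivity.
Qed.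

Definition fib {E B : Type} (p : E -> B) (b : B) := {e : E | p e = b}.
Definition Dp {E B : Type} (p : E -> B) (X : Type) : Type := {b : B & X -> fib p b}.
Definition Dp_map {E B : Type} (p : E -> B) (X Y : Type) (f : X -> Y) (w : Dp p Y) : Dp p X :=
  existT _ (projT1 w) (fun x => projT2 w (f x)).

Lemma Dp_map_id {E B} (p : E -> B) X (w : Dp p X) : Dp_map p X X (fun z => z) w = w.
Proof. destruct w; reflexivity. Qed.

Lemma Dp_map_comp {E B} (p : E -> B) X Y Z (f : X -> Y) (g : Y -> Z) (z : Dp p Z) :
  Dp_map p X Z (fun x => g (f x)) z = Dp_map p X Y f (Dp_map p Y Z g z).
Proof. reflexivity. Qed.

Definition DpF {E B : Type} (p : E -> B) : CFun :=
  {| fob := Dp p; fmap := Dp_map p; fmap_id := Dp_map_id p; fmap_comp := Dp_map_comp p |}.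

Lemma Deq {E B} (p : E -> B) X (w1 w2 : Dp p X) : projT1 w1 = projT1 w2 ->
  (forall x, proj1_sig (projT2 w1 x) = proj1_sig (projT2 w2 x)) -> w1 = w2.
Proof.
  destruct w1 as [b1 s1], w2 as [b2 s2]; simpl; intros Hb Hs; subst b2. f_equal.
  extensionality x. specialize (Hs x). destruct (s1 x), (s2 x); simpl in Hs; subst.
  f_equal. apply proof_irrelevance.
Qed.

Lemma colim_surj {J} (F : Diagram J) C iota : is_colimit F C iota -> forall c, exists j x, iota j x = c.
Proof.
  intros [Hc Hu] c.
  destruct (Hu Prop (fun _ _ => True) (fun _ _ _ _ => eq_refl)) as [h [H1 H2]].
  assert (E1 : (fun c => exists j x, iota j x = c) c = h c).
  { apply (H2 (fun c => exists j x, iota j x = c)). intros j x.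
    apply propositional_extensionality. split; [intros _; exact I|intros _; exists j, x; reflexivity]. }
  assert (E2 : (fun _ : C => True) c = h c) by (apply (H2 (fun _ => True)); auto).
  simpl in *. rewrite E1, <- E2. exact I.
Qed.

Lemma conn_const {J : Cat} (Hc : connected J) {A : Type} (f : ob J -> A) :
  (forall a b, hom J a b -> f a = f b) -> forall a b, f a = f b.
Proof.
  intros H a b. destruct Hc as [_ Hc].
  induction (Hc a b) as [x y [u] | x | x y _ IH | x y z _ IH1 _ IH2]; eauto; congruence.
Qed.

Lemma Dp_dir {E B : Type} (p : E -> B) : is_dirichlet (DpF p).
Proof.
  intros J Hcon F C iota Hcol T q Hq.
  destruct (proj1 Hcon) as [j0].
  pose (bt := fun t => projT1 (q j0 t)).
  assert (Hb : forall j t, projT1 (q j t) = bt t).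
  { intros j t. apply (conn_const Hcon (fun j => projT1 (q j t))). intros a b u.
    rewrite <- (Hq a b u t). reflexivity. }
  assert (Hk : forall t, exists k : C -> E, forall j x, k (iota j x) = proj1_sig (projT2 (q j t) x)).
  { intros t. destruct Hcol as [_ Hu].
    destruct (Hu E (fun j x => proj1_sig (projT2 (q j t) x))) as [k [Hk _]].
    - intros a b u x. exact (f_equal (fun w : Dp p (dob F a) => proj1_sig (projT2 w x)) (Hq a b u t)).
    - eauto. }
  destruct (fchoice _ Hk) as [k Hk'].
  assert (pk : forall t c, p (k t c) = bt t).
  { intros t c. destruct (colim_surj _ _ _ Hcol c) as [j [x <-]]. rewrite Hk'.
    rewrite (proj2_sig (projT2 (q j t) x)). apply Hb. }
  exists (fun t => existT (fun b => C -> fib p b) (bt t) (fun c => exist _ (k t c) (pk t c))).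
  split.
  - intros j t. apply Deq; simpl.
    + symmetry; apply Hb.
    + intros x. apply Hk'.
  - intros h' Hh' t. apply Deq.
    + pose proof (f_equal (@projT1 _ _) (Hh' j0 t)) as H. simpl in H. rewrite H. reflexivity.
    + intros c. destruct (colim_surj _ _ _ Hcol c) as [j [x <-]].
      pose proof (f_equal (fun w : Dp p (dob F j) => proj1_sig (projT2 w x)) (Hh' j t)) as H. simpl in H.
      simpl. rewrite H, Hk'. reflexivity.
Qed.

Lemma part_ii (E B : Type) (p : E -> B) :
     exists D : CFun, is_dirichlet D /\
       exists (a : fob D unit -> E) (b : fob D Empty_set -> B),
         bijective a /\ bijective b /\
         is_pullback a (fmap D bang0) p b.
Proof.
  exists (DpF p). split; [apply Dp_dir|].
  exists (fun w : Dp p unit => proj1_sig (projT2 w tt)).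
  exists (fun w : Dp p Empty_set => projT1 w).
  pose (ai := fun e : E => existT (fun b => unit -> fib p b) (p e) (fun _ => exist _ e eq_refl)).
  split; [|split].
  - exists ai. split.
    + intros w. apply Deq; simpl.
      * exact (proj2_sig (projT2 w tt)).
      * intros []. reflexivity.
    + intros e. reflexivity.
  - exists (fun b => existT (fun b => Empty_set -> fib p b) b (fun z => match z with end)). split.
    + intros w. apply Deq; simpl; [reflexivity|intros []].
    + intros b. reflexivity.
  - apply pb_of_elem.
    + intros z. exact (proj2_sig (projT2 z tt)).
    + intros e c Hec. exists (ai e). split; [reflexivity|split].
      * apply Deq; simpl; [exact Hec|intros []].
      * intros q' E1 E2. apply Deq; simpl.
        -- rewrite <- E1. symmetry. exact (proj2_sig (projT2 q' tt)).
        -- intros []. exact E1.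
Qed.

Theorem proposition3p1 :
  (forall (D D' : CFun) (phi : forall X, fob D X -> fob D' X),
     is_dirichlet D -> is_dirichlet D' -> natural D D' phi ->
     (cartesian D D' phi <->
      is_pullback (phi unit) (fmap D bang0) (fmap D' bang0) (phi Empty_set)))
  /\
  (forall (D D' : CFun), is_dirichlet D -> is_dirichlet D' ->
     forall (f1 : fob D unit -> fob D' unit) (f0 : fob D Empty_set -> fob D' Empty_set),
       is_pullback f1 (fmap D bang0) (fmap D' bang0) f0 ->
       exists phi : forall X, fob D X -> fob D' X,
         natural D D' phi /\ cartesian D D' phi /\
         (forall x, phi unit x = f1 x) /\ (forall x, phi Empty_set x = f0 x) /\
         (forall psi : forall X, fob D X -> fob D' X,
            natural D D' psi -> cartesian D D' psi ->
            (forall x, psi unit x = f1 x) -> (forall x, psi Empty_set x = f0 x) ->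
            forall X x, psi X x = phi X x))
  /\
  (forall (E B : Type) (p : E -> B),
     exists D : CFun, is_dirichlet D /\
       exists (a : fob D unit -> E) (b : fob D Empty_set -> B),
         bijective a /\ bijective b /\
         is_pullback a (fmap D bang0) p b).
Proof.
  split; [|split].
  - intros D D' phi HD HD' Hn. split.
    + intros Hc. apply Hc.
    + intros P0. apply cart_of_pb; auto.
  - exact part_i.
  - exact part_ii.
Qed.
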